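(* Let $M \subseteq \mathbb{N}_0$ be a semiideal. If $d$ is a difference of $M$, then there is an element $c \in M$ with $c \neq 0$ and $c$ divisible by $d$, such that $c + nd \in M$ for all $n \in \mathbb{N}_0$.
   Context: $\mathbb{N}_0$ denotes the semiring of natural numbers including $0$ with usual addition and multiplication. A semiideal of $\mathbb{N}_0$ is a nonempty subset $M \subseteq \mathbb{N}_0$ such that $m+m' \in M$ and $rm \in M$ for all $m,m' \in M$, $r \in \mathbb{N}_0$ (so $0 \in M$). For a semiideal $M \neq 0$, an element $d \in \mathbb{N} = \mathbb{N}_0\setminus\{0\}$ is called a difference of $M$ if there exist $a, b \in M$ with $a \neq 0$ and $a + d = b$. *)

(* Defs.v *)
From mathcomp Require Import all_boot.

Definition semiideal (M : nat -> Prop) : Prop :=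
  (exists m, M m) /\
  (forall m m', M m -> M m' -> M (m + m')) /\
  (forall r m, M m -> M (r * m)).

Definition difference (M : nat -> Prop) (d : nat) : Prop :=
  0 < d /\ exists a b, M a /\ M b /\ a <> 0 /\ a + d = b.

(* Main.v *)
Require Import Defs.
From mathcomp Require Import all_boot.
From mathcomp Require Import zify.

Theorem theorem4p2 (M : nat -> Prop) (d : nat) :
  semiideal M -> (exists m, M m /\ m <> 0) -> difference M d ->
  exists c, M c /\ c <> 0 /\ d %| c /\ forall n : nat, M (c + n * d).
Proof.
move=> [_ [Hadd Hmul]] _ [dpos [a [b [Ma [Mb [a0 ab]]]]]].
exists (a * a * d); split; first by rewrite -mulnA mulnC; apply: Hmul.
split; first by nia.
split; first by apply: dvdn_mull.
move=> n.
have apos : 0 < a by lia.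
have -> : a * a * d + n * d = (a * d - n %% a + n %/ a * d) * a + (n %% a) * b.
  have e := divn_eq n a. have lt := ltn_pmod n apos.
  subst b. nia.
by apply: Hadd; apply: Hmul.
Qed.
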